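(* For any recipes $R$ and $R'$ there are recipes $R_1$ and $R_2$ such that $R[R_1/R_2]=R'$.
   Context: Fix disjoint finite sets $\mathcal C$ (comestible nodes) and $\mathcal A$ (action nodes). A type hierarchy is an acyclic directed graph with a unique maximal node; $t_1\preceq t_2$ means $t_1$ is a subtype of or equal to $t_2$, and $t_1\simeq t_2$ means $t_1\preceq t_2$ or $t_2\preceq t_1$. A recipe graph is $(C,A,E)$ with: (1) $\emptyset\subset C\subseteq\mathcal C$, $\emptyset\subset A\subseteq\mathcal A$; (2) $E\subseteq(C\times A)\cup(A\times C)$; (3) $(C\cup A,E)$ is a connected acyclic directed graph; (4) every action node has at least one incoming and one outgoing arc; (5) every comestible node has at most one incoming arc. A recipe is $(C,A,E,F)$ with $(C,A,E)$ a recipe graph and $F$ assigning a comestible type to each node of $C$ and an action type to each node of $A$ such that $F(n)\simeq F(n')$ for $n,n'\in C$ implies $n=n'$. For a recipe $R=(C,A,E,F)$ write $\mathsf{Coms}(R)=C$, $\mathsf{Acts}(R)=A$, $\mathsf{Nodes}(R)=C\cup A$, $\mathsf{Arcs}(R)=E$, $\mathsf{Type}(R)=F$; $\mathsf{In}(R)$ (resp. $\mathsf{Out}(R)$) are the comestible nodes with no incoming (resp. outgoing) arc. $R'=(C',A',E',F')$ is a subrecipe of $R$, $R'\sqsubseteq R$, iff $C'\subseteq C$, $A'\subseteq A$, $E'=E\cap((C'\times A')\cup(A'\times C'))$, and $F'=F$ on $C'\cup A'$. $R'$ is an untrimmed subrecipe of $R$, $R'\sqsubseteq^* R$, iff $R'\sqsubseteq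 R$ and for every $a\in\mathsf{Acts}(R')$, whenever $(c,a)$ or $(a,c)$ is in $\mathsf{Arcs}(R)$ then $c\in\mathsf{Nodes}(R')$. For $R'\sqsubseteq R$, $\mathsf{Front}(R,R')=(\mathsf{Out}(R')\setminus\mathsf{Out}(R))\cup(\mathsf{In}(R')\setminus\mathsf{In}(R))$. $R_1$ is parallel to $R_2$ w.r.t. $R$ iff for every $c\in\mathsf{Front}(R,R_1)$: for every $(c,a)\in\mathsf{Arcs}(R_1)$ there is some $(c,a')\in\mathsf{Arcs}(R_2)$, and for every $(a,c)\in\mathsf{Arcs}(R_1)$ there is some $(a',c)\in\mathsf{Arcs}(R_2)$. Structural substitution: let $F=\mathsf{Type}(R)$, $F_2=\mathsf{Type}(R_2)$. If (i) $\mathsf{Front}(R,R_1)\subseteq\mathsf{In}(R_2)\cup\mathsf{Out}(R_2)$; (ii) $R_1$ is parallel to $R_2$ w.r.t. $R$; (iii) $R_1\sqsubseteq^* R$; (iv) $(\mathsf{Nodes}(R)\setminus\mathsf{Nodes}(R_1))\cap\mathsf{Nodes}(R_2)=\emptyset$; (v) for all $n\in\mathsf{Nodes}(R)\setminus\mathsf{Nodes}(R_1)$ and $n'\in\mathsf{Nodes}(R_2)$, $F(n)\simeq F_2(n')$ implies $n=n'$, then $R[R_1/R_2]=(C',A',E',F')$ with $C'=(\mathsf{Coms}(R)\setminus\mathsf{Coms}(R_1))\cup\mathsf{Coms}(R_2)$, $A'=(\mathsf{Acts}(R)\setminus\mathsf{Acts}(R_1))\cup\mathsf{Acts}(R_2)$,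 $E'=(\mathsf{Arcs}(R)\setminus\mathsf{Arcs}(R_1))\cup\mathsf{Arcs}(R_2)$, and $F'(n)=F_2(n)$ if $n\in\mathsf{Nodes}(R_2)$, $F'(n)=F(n)$ otherwise; if any condition fails, $R[R_1/R_2]=\bot$. *)

(* Defs.v *)
From Stdlib Require Import ClassicalEpsilon.
From mathcomp Require Import all_boot.
Set Implicit Arguments. Unset Strict Implicit. Unset Printing Implicit Defensive.

(* A type hierarchy on a finite set T of types: sub t1 t2 is an arc meaning
   t1 is a direct subtype of t2; acyclic, with a unique maximal node. *)
Definition maximal_node (T : finType) (sub : rel T) (m : T) : Prop :=
  forall t, ~~ sub m t.

Definition is_type_hierarchy (T : finType) (sub : rel T) : Prop :=
  (forall x y, sub x y -> ~~ connect sub y x) /\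
  (exists m, maximal_node sub m /\ forall m', maximal_node sub m' -> m' = m).

Definition subtype_of (T : finType) (sub : rel T) (t1 t2 : T) : bool :=
  connect sub t1 t2.
Definition comparable_ty (T : finType) (sub : rel T) (t1 t2 : T) : bool :=
  subtype_of sub t1 t2 || subtype_of sub t2 t1.

Section Recipes.
(* Cn = the comestible node universe, An = the action node universe;
   disjointness is built in by taking nodes in the sum type. *)
Variables (Cn An : finType).
Variables (TC TA : finType) (subC : rel TC) (subA : rel TA).

Definition node := (Cn + An)%type.

(* Raw data (C, A, E, F); F is a partial typing function whose domain is
   required (in is_recipe) to be exactly C (resp. A). *)
Record raw := Raw {
  rC : {set Cn};
  rA : {set An};
  rE : {set node * node};
  rFC : {ffun Cn -> option TC};
  rFA : {ffun An -> option TA}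
}.

Definition Coms (R : raw) := rC R.
Definition Acts (R : raw) := rA R.
Definition Arcs (R : raw) := rE R.
Definition Nodes (R : raw) : {set node} :=
  (inl @: rC R) :|: (inr @: rA R).

Definition arc (R : raw) : rel node := fun x y => (x, y) \in rE R.
Definition uarc (R : raw) : rel node := fun x y => arc R x y || arc R y x.

Definition bip (C : {set Cn}) (A : {set An}) : {set node * node} :=
  [set e | match e with
           | (inl c, inr a) => (c \in C) && (a \in A)
           | (inr a, inl c) => (c \in C) && (a \in A)
           | _ => false end].

Definition is_recipe_graph (R : raw) : Prop :=
  [/\ (rC R != set0) && (rA R != set0),
      rE R \subset bip (rC R) (rA R),
      ((forall x y, x \in Nodes R -> y \in Nodes R -> connect (uarc R) x y)
       /\
       (forall x y, arc R x y -> ~~ connect (arc R) y x)),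
      (forall a, a \in rA R ->
         (exists c, arc R (inl c) (inr a)) /\ (exists c, arc R (inr a) (inl c)))
    & (forall c, c \in rC R -> #|[set x | arc R x (inl c)]| <= 1)].

Definition sim_opt (T : finType) (sub : rel T) (o o' : option T) : bool :=
  match o, o' with Some t, Some t' => comparable_ty sub t t' | _, _ => false end.

Definition is_recipe (R : raw) : Prop :=
  [/\ is_recipe_graph R,
      (forall c, (rFC R c != None) = (c \in rC R)),
      (forall a, (rFA R a != None) = (a \in rA R))
    & (forall c c', c \in rC R -> c' \in rC R ->
         sim_opt subC (rFC R c) (rFC R c') -> c = c')].

Definition In_ (R : raw) : {set Cn} :=
  [set c in rC R | ~~ [exists x, arc R x (inl c)]].
Definition Out_ (R : raw) : {set Cn} :=
  [set c in rC R | ~~ [exists x, arc R (inl c) x]].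

Definition subrecipe (R' R : raw) : Prop :=
  [/\ rC R' \subset rC R, rA R' \subset rA R,
      rE R' = rE R :&: bip (rC R') (rA R'),
      (forall c, c \in rC R' -> rFC R' c = rFC R c)
    & (forall a, a \in rA R' -> rFA R' a = rFA R a)].

Definition untrimmed_subrecipe (R' R : raw) : Prop :=
  subrecipe R' R /\
  forall a c, a \in rA R' ->
    (arc R (inl c) (inr a) || arc R (inr a) (inl c)) -> inl c \in Nodes R'.

Definition Front (R R' : raw) : {set Cn} :=
  (Out_ R' :\: Out_ R) :|: (In_ R' :\: In_ R).

Definition parallel (R1 R2 R : raw) : Prop :=
  forall c, c \in Front R R1 ->
    (forall a, arc R1 (inl c) a -> exists a', arc R2 (inl c) a') /\
    (forall a, arc R1 a (inl c) -> exists a', arc R2 a' (inl c)).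

(* typing of an arbitrary node; comestible and action types live in
   different hierarchies, hence are never comparable *)
Definition sim_node (R R2 : raw) (n n' : node) : bool :=
  match n, n' with
  | inl c, inl c' => sim_opt subC (rFC R c) (rFC R2 c')
  | inr a, inr a' => sim_opt subA (rFA R a) (rFA R2 a')
  | _, _ => false
  end.

Definition subst_conditions (R R1 R2 : raw) : Prop :=
  [/\ Front R R1 \subset In_ R2 :|: Out_ R2,
      parallel R1 R2 R,
      untrimmed_subrecipe R1 R,
      (Nodes R :\: Nodes R1) :&: Nodes R2 = set0
    & (forall n n', n \in Nodes R :\: Nodes R1 -> n' \in Nodes R2 ->
         sim_node R R2 n n' -> n = n')].

Definition subst_result (R R1 R2 : raw) : raw :=
  let C' := (rC R :\: rC R1) :|: rC R2 in
  let A' := (rA R :\: rA R1) :|: rA R2 in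
  Raw C' A' ((rE R :\: rE R1) :|: rE R2)
      [ffun c => if c \in rC R2 then rFC R2 c
                 else if c \in C' then rFC R c else None]
      [ffun a => if a \in rA R2 then rFA R2 a
                 else if a \in A' then rFA R a else None].

(* R[R1/R2]; None stands for ⊥ *)
Definition subst (R R1 R2 : raw) : option raw :=
  if excluded_middle_informative (subst_conditions R R1 R2) then Some (subst_result R R1 R2) else None.

End Recipes.

(* Main.v *)
Require Import Defs.
From mathcomp Require Import all_boot.

Theorem mainTheorem9 (Cn An TC TA : finType) (subC : rel TC) (subA : rel TA)
    (hC : is_type_hierarchy subC) (hA : is_type_hierarchy subA)
    (R R' : raw Cn An TC TA)
    (hR : is_recipe subC R) (hR' : is_recipe subC R') :
  exists R1 R2 : raw Cn An TC TA,
    is_recipe subC R1 /\ is_recipe subC R2 /\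
    subst subC subA R R1 R2 = Some R'.
Proof.
exists R, R'; split; first exact hR; split; first exact hR'.
have Hc : subst_conditions subC subA R R R'.
  have FE : Front R R = set0 by rewrite /Front !setDv setU0.
  case: hR => [[_ Hsub _ _ _] _ _ _].
  split.
  - by rewrite FE sub0set.
  - by move=> c; rewrite FE inE.
  - split.
      split => //; apply/esym/setIidPl; exact: Hsub.
    move=> a c aA /orP [] H; move/subsetP: Hsub => /(_ _ H); rewrite inE.
      by move=> /andP [cC _]; rewrite /Nodes inE; apply/orP; left; apply/imsetP; exists c.
    by move=> /andP [cC _]; rewrite /Nodes inE; apply/orP; left; apply/imsetP; exists c.
  - by rewrite setDv set0I.
  - by move=> n n'; rewrite setDv inE.
rewrite /subst; destruct (ClassicalEpsilon.excluded_middle_informative _) as [HH|N]; last by exfalso; apply: N. congr Some. clear Hc HH.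
case: hR' => _ HC HA _.
case: R' HC HA => C A E FC FA /= HC HA.
rewrite /subst_result /= !setDv !set0U; congr Raw.
  apply/ffunP => c; rewrite ffunE; case: ifP => // cC; rewrite cC.
  by move: (HC c); rewrite cC => /negbFE/eqP.
apply/ffunP => a; rewrite ffunE; case: ifP => // aA; rewrite aA.
by move: (HA a); rewrite aA => /negbFE/eqP.
Qed.
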